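(* Let $g$ be a game on a finite graph and $a$ a player whose preference $\prec_a$ is a strict weak order. Assume that for every history $h$ and every $p\in[H_{g_h}]$, if the first player has a winning strategy in the one-vs-all threshold game $(g_h)^{a,p}$ then she has one with memory size $m$. Then for every $h\in H$ there exists a strategy $s_a$ of $a$ in $g_h$ with memory size $m$ such that $\gamma_a(h,s_a)=\Gamma_a(h)$.
   Context: A game on a finite graph $g=\langle(V,E),v_0,A,\{V_a\}_{a\in A},(\prec_a)_{a\in A}\rangle$: $(V,E)$ is a finite directed graph in which every vertex has an outgoing edge, $v_0$ the start, $\{V_a\}$ a partition of $V$ by owner, and $\prec_a\subseteq[H]\times[H]$, where $H$ is the set of finite paths from $v_0$ and $[H]$ the infinite ones. A strategy of $a$ maps each history ending in $V_a$ to a successor of its last vertex. A strategy has memory size $m$ if it is implemented by a function $\sigma:V\times\{0,1\}^m\to V\times\{0,1\}^m$: memory starts at $0^m$, after visiting vertex $v$ with memory $M$ the memory becomes $\pi_2\sigma(v,M)$, and the move at a history ending in $v$ is $\pi_1\sigma(v,M)$ with $M$ the current memory. For $h\in H$ ending in $v_1$, the future game $g_h$ is the game started at $v_1$ with preferences $v_1p\prec^h_a v_1p'$ iff $hp\prec_a hp'$ ($hp$ is $h$ continued by $v_1p$). The one-vs-all threshold game $g^{a,p}$ (for a game $g$, $a\in A$, $p$ an infinite play of $g$) is the two-player win/lose game on the same graph and start, where the first player owns $V_a$, the second owns $\bigcup_{b\neq a}V_b$, and the first player wins exactly the plays $p'$ with $p\prec_a p'$. For a strategy $s_a$ of $a$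 in $g_h$: $[H_{g_h}]$ is the set of infinite paths from $v_1$, $[H_{g_h}(s_a)]$ those consistent with $s_a$, $\gamma_a(h,s_a):=\{v_1p\in[H_{g_h}]\mid\exists v_1p'\in[H_{g_h}(s_a)],\ \neg(hp\prec_a hp')\}$ and $\Gamma_a(h):=\bigcap_{s_a}\gamma_a(h,s_a)$. A strict weak order is an irreflexive, transitive relation with $\neg(x\prec y)\wedge\neg(y\prec z)\Rightarrow\neg(x\prec z)$. *)

(* Defs.v *)
From mathcomp Require Import all_boot.
Set Implicit Arguments. Unset Strict Implicit. Unset Printing Implicit Defensive.

Section Games.
Variables (V : finType) (E : rel V).

Definition play := nat -> V.

Definition hist_from (v : V) (h : seq V) : bool :=
  if h is x :: t then (x == v) && path E x t else false.

Definition play_from (v : V) (p : play) : Prop :=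
  p 0 = v /\ forall n, E (p n) (p n.+1).

Definition pref (p : play) (n : nat) : seq V := [seq p i | i <- iota 0 n.+1].

Definition strict_weak_order (S : play -> Prop) (R : play -> play -> Prop) : Prop :=
  (forall x, S x -> ~ R x x) /\
  (forall x y z, S x -> S y -> S z -> R x y -> R y z -> R x z) /\
  (forall x y z, S x -> S y -> S z -> ~ R x y -> ~ R y z -> ~ R x z).

Variables (A : Type) (own : V -> A).

Definition strategy := seq V -> V.

Definition is_strategy (a : A) (v : V) (s : strategy) : Prop :=
  forall h, hist_from v h -> own (last v h) = a -> E (last v h) (s h).

Definition consistent (a : A) (s : strategy) (p : play) : Prop :=
  forall n, own (p n) = a -> p n.+1 = s (pref p n).

(* memory: m-bit words, initial memory 0^m *)
Definition mem0 (m : nat) : m.-tuple bool := [tuple of nseq m false].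

Definition mem_after (m : nat) (sigma : V * m.-tuple bool -> V * m.-tuple bool)
  (l : seq V) : m.-tuple bool :=
  foldl (fun M w => (sigma (w, M)).2) (mem0 m) l.

Definition drop_last (h : seq V) : seq V :=
  if h is x :: t then belast x t else [::].

Definition has_memory (a : A) (v : V) (m : nat) (s : strategy) : Prop :=
  exists sigma : V * m.-tuple bool -> V * m.-tuple bool,
    forall h, hist_from v h -> own (last v h) = a ->
      s h = (sigma (last v h, mem_after sigma (drop_last h))).1.

(* hp : the history h (ending in v1) continued by the play v1 p *)
Definition hcat (h : seq V) (p : play) : play :=
  fun n => if n < (size h).-1 then nth (p 0) h n else p (n - (size h).-1).

Variables (v0 : V) (prec : A -> play -> play -> Prop).

(* s wins the one-vs-all threshold game (g_h)^{a,p}: every play of g_h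
   consistent with s is strictly preferred to p by a (under prec^h) *)
Definition wins_threshold (a : A) (h : seq V) (p : play) (s : strategy) : Prop :=
  forall q, play_from (last v0 h) q -> consistent a s q -> prec a (hcat h p) (hcat h q).

Definition gamma (a : A) (h : seq V) (s : strategy) (q : play) : Prop :=
  play_from (last v0 h) q /\
  exists q', play_from (last v0 h) q' /\ consistent a s q' /\
             ~ prec a (hcat h q) (hcat h q').

Definition Gamma (a : A) (h : seq V) (q : play) : Prop :=
  forall s, is_strategy a (last v0 h) s -> gamma a h s q.

End Games.

(* Main.v *)
Require Import Defs.
From mathcomp Require Import all_boot.
From mathcomp Require Import zify.
From Stdlib Require Import Classical FunctionalExtensionality.

Lemma pref_S (V : finType) (p : play V) n : pref p n.+1 = rcons (pref p n) (p n.+1).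
Proof.
rewrite /pref (_ : n.+2 = n.+1 + 1); last by rewrite addn1.
by rewrite iotaD map_cat /= add0n cats1.
Qed.

Lemma pref_hist (V : finType) (E : rel V) v (p : play V) :
  play_from E v p -> forall n, hist_from E v (pref p n) /\ last v (pref p n) = p n.
Proof.
move=> [H0 HE]; elim=> [|n [IH1 IH2]].
  by rewrite /pref /= H0 eqxx.
rewrite pref_S.
case Hp: (pref p n) IH1 IH2 => [|x t] //= /andP [Hx Ht] Hl.
rewrite Hx rcons_path Ht /= last_rcons; split => //.
by rewrite Hl.
Qed.

Lemma hcat_play (V : finType) (E : rel V) v0 h (q : play V) :
  hist_from E v0 h -> play_from E (last v0 h) q -> play_from E v0 (hcat h q).
Proof.
case: h => [|x t] //= /andP [/eqP -> Ht] [Hq0 HqE].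
rewrite /hcat /=; split.
  case: t Ht Hq0 => [|y t] //= _ ->; done.
move=> n.
have Hl : last v0 t = nth (q 0) (v0 :: t) (size t) by rewrite (last_nth (q 0)).
case: (ltnP n.+1 (size t)) => H1.
  rewrite (ltnW H1) /=.
  by move/(pathP (q 0)): Ht => /(_ n (ltnW H1)).
case: (ltnP n (size t)) => H2.
  have Hn : n.+1 = size t by lia.
  rewrite (_ : n.+1 - size t = 0); last by lia.
  rewrite Hq0 Hl -Hn /=.
  rewrite [nth _ (v0 :: t) n](set_nth_default (q 0)); last by rewrite /=; lia.
  by move/(pathP (q 0)): Ht => /(_ n H2).
rewrite (_ : n.+1 - size t = (n - size t).+1); last by lia.
exact: HqE.
Qed.

Arguments hcat_play {V E v0 h q}.
Arguments pref_hist {V E v p}.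

Lemma cons_ext (V : finType) (E : rel V) (A : Type) (own : V -> A) a v s1 s2 (q : play V) :
  (forall h', hist_from E v h' -> own (last v h') = a -> s1 h' = s2 h') ->
  play_from E v q -> consistent own a s1 q -> consistent own a s2 q.
Proof.
move=> Hs Hq Hc n Ho; rewrite Hc //.
have [H1 H2] := @pref_hist _ _ _ _ Hq n.
by apply: Hs => //; rewrite H2.
Qed.

Lemma max_list (T : eqType) (G : T -> Prop) (R : T -> T -> Prop) :
  (forall x, R x x) -> (forall x y z, R x y -> R y z -> R x z) ->
  (forall x y, R x y \/ R y x) ->
  forall l : seq T, (exists2 x, x \in l & G x) ->
  exists y, G y /\ forall x, x \in l -> G x -> R x y.
Proof.
move=> Rr Rt Rc; elim=> [|x l IH]; first by case.
move=> Hex.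
case: (classic (exists2 y, y \in l & G y)) => Hl.
  have [y [Gy Hy]] := IH Hl.
  case: (classic (G x)) => Gx.
    case: (Rc x y) => Rxy.
      exists y; split => // z; rewrite inE => /orP [/eqP -> | ] //; exact: Hy.
    exists x; split => // z; rewrite inE => /orP [/eqP -> | zl Gz] //.
    exact: Rt (Hy z zl Gz) Rxy.
  exists y; split => // z; rewrite inE => /orP [/eqP -> | ] //; exact: Hy.
have Gx : G x.
  case: Hex => y; rewrite inE => /orP [/eqP -> | yl Gy] //.
  by case: Hl; exists y.
exists x; split => // z; rewrite inE => /orP [/eqP -> | zl Gz] //.
by case: Hl; exists z.
Qed.

Theorem lemma37 (V : finType) (E : rel V) (v0 : V) (A : Type) (own : V -> A)
  (prec : A -> play V -> play V -> Prop) (a : A) (m : nat) :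
  (forall v, exists w, E v w) ->
  strict_weak_order (play_from E v0) (prec a) ->
  (forall h, hist_from E v0 h -> forall p, play_from E (last v0 h) p ->
     (exists s, is_strategy E own a (last v0 h) s /\
                wins_threshold E own v0 prec a h p s) ->
     exists s, is_strategy E own a (last v0 h) s /\
               has_memory E own a (last v0 h) m s /\
               wins_threshold E own v0 prec a h p s) ->
  forall h, hist_from E v0 h ->
    exists s, is_strategy E own a (last v0 h) s /\
              has_memory E own a (last v0 h) m s /\
              (forall q, gamma E own v0 prec a h s q <-> Gamma E own v0 prec a h q).
Proof.
move=> Hsucc [Hirr [Htr Hntr]] Hmem h hh.
set v := last v0 h.
pose W (s : strategy V) q := play_from E v q /\ wins_threshold E own v0 prec a h q s.
pose strat (f : V * m.-tuple bool -> V * m.-tuple bool) : strategy V :=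
  fun h' => (f (last v h', mem_after f (drop_last h'))).1.
pose G (sig : {ffun V * m.-tuple bool -> V * m.-tuple bool}) :=
  exists s, is_strategy E own a v s /\
    forall h', hist_from E v h' -> own (last v h') = a -> s h' = strat sig h'.
have K1 : forall s f, (forall h', hist_from E v h' -> own (last v h') = a -> s h' = strat f h') ->
    forall q, W s q <-> W (strat f) q.
  move=> s f Hs q; split=> [[Hq Hw]|[Hq Hw]]; split=> // q' Hq' Hc; apply: Hw => //.
    apply: (@cons_ext V E A own a v _ _ q' _ Hq' Hc) => h' H1 H2; symmetry; exact: Hs.
  exact: (@cons_ext V E A own a v _ _ q' _ Hq' Hc).
have D : forall s q q2, W s q -> play_from E v q2 -> ~ prec a (hcat h q) (hcat h q2) -> W s q2.
  move=> s q q2 [Hq Hw] Hq2 Hn; split=> // q' Hq' Hc.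
  have P := Hw q' Hq' Hc.
  apply: NNPP => Hn2.
  exact: (Hntr _ _ _ (hcat_play hh Hq) (hcat_play hh Hq2) (hcat_play hh Hq') Hn Hn2 P).
have C : forall s1 s2, (forall q, W s1 q -> W s2 q) \/ (forall q, W s2 q -> W s1 q).
  move=> s1 s2; case: (classic (forall q, W s1 q -> W s2 q)) => H; first by left.
  right=> q2 H2.
  have [q1 H1n] := not_all_ex_not _ _ H.
  have [H1 N2] := imply_to_and _ _ H1n.
  have Hp : prec a (hcat h q2) (hcat h q1).
    apply: NNPP => Hn; apply: N2; apply: (D _ q2) => //; exact: H1.1.
  case: H1 => Hq1 Hw1; case: H2 => Hq2 Hw2; split=> // q' Hq' Hc.
  exact: (Htr _ _ _ (hcat_play hh Hq2) (hcat_play hh Hq1) (hcat_play hh Hq') Hp (Hw1 q' Hq' Hc)).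
have ff : forall f : V * m.-tuple bool -> V * m.-tuple bool,
    (finfun f : V * m.-tuple bool -> V * m.-tuple bool) = f.
  by move=> f; apply: functional_extensionality => x; rewrite ffunE.
pose sigma0 (x : V * m.-tuple bool) := (odflt x.1 [pick w | E x.1 w], x.2).
have G0 : G (finfun sigma0).
  exists (strat sigma0); split; last by move=> h' _ _; rewrite ff.
  move=> h' _ _; rewrite /strat /sigma0 /=.
  case: pickP => [w //|Hn].
  by have [w Hw] := Hsucc (last v h'); have := Hn w; rewrite Hw.
pose R sig1 sig2 := forall q, W (strat sig1) q -> W (strat sig2) q.
have [sig [[s [Hs Hsm]] Hmax]] :
    exists y, G y /\ forall x, x \in enum {ffun V * m.-tuple bool -> V * m.-tuple bool} -> G x -> R x y.
  apply: max_list.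
  - by move=> x q.
  - by move=> x y z Hxy Hyz q Hq; apply: Hyz; apply: Hxy.
  - by move=> x y; apply: C.
  - by exists (finfun sigma0); rewrite ?mem_enum.
exists s; split => //; split; first by exists sig.
move=> q; split; last by move=> HG; apply: HG.
move=> [Hq [q' [Hq' [Hc Hn]]]] s' Hs'; split => //.
apply: NNPP => Hng.
have Hw : wins_threshold E own v0 prec a h q s'.
  move=> r Hr Hcr; apply: NNPP => Hnp; apply: Hng; exists r; done.
have [sq [Hsq [[sigq Hsigq] Hwq]]] := Hmem h hh q Hq (ex_intro _ s' (conj Hs' Hw)).
have Gq : G (finfun sigq).
  by exists sq; split => // h' H1 H2; rewrite /strat ff; apply: Hsigq.
have Wq : W (strat (finfun sigq)) q.
  have Hag : forall h', hist_from E v h' -> own (last v h') = a -> sq h' = strat (finfun sigq) h'.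
    by move=> h' H1 H2; rewrite /strat ff; apply: Hsigq.
  by apply: (proj1 (K1 _ _ Hag q)); split.
have Ws : W (strat sig) q by apply: (Hmax _ _ Gq); rewrite ?mem_enum.
have [_ Hws] := (proj2 (K1 _ _ Hsm q) Ws).
by apply: Hn; apply: Hws.
Qed.
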